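(* $16\rightarrow 167\rightrightarrows 19$: there is an injective isotone map $\varphi:\mathbf 2^4\to F_4^-$ such that $\{\varphi(x)[p_1:=e]: x\in\mathbf 2^4,\ e\in\{0,1\}\}\supseteq F_3^-$.
   Context: $F_k$ is the set of monotone Boolean functions of $k$ variables $p_1,\dots,p_k$ (including constants $0,1$), ordered pointwise; $F_k^-=F_k\setminus\{0\}$. For $g\in F_k$ and $e\in\{0,1\}$, $g[p_1:=e]$ is the function of $p_2,\dots,p_k$ (identified with $F_{k-1}$) obtained by substituting $e$ for $p_1$. $\mathbf 2^i$ is $\{0,1\}^i$ with the coordinatewise order; isotone means order-preserving. Notation: $2^i\rightarrow|F_j^-|\rightrightarrows|F_{j-1}^-|$ means there is an injective isotone map $\varphi:\mathbf 2^i\to F_j^-$ such that every element of $F_{j-1}^-$ equals $\varphi(x)[p_1:=e]$ for some $x\in\mathbf 2^i$, $e\in\{0,1\}$. Here $|F_3^-|=19$, $|F_4^-|=167$. *)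

(* Defs.v *)
From mathcomp Require Import all_boot.
Set Implicit Arguments. Unset Strict Implicit. Unset Printing Implicit Defensive.

(* Points of the Boolean cube 2^k: assignments of truth values to p_1..p_k
   (index i : 'I_k stands for p_(i+1)). *)
Definition cube (k : nat) := {ffun 'I_k -> bool}.

Definition cube_le (k : nat) (a b : cube k) : Prop := forall i, a i <= b i.

Definition boolfun (k : nat) := {ffun cube k -> bool}.

Definition bf_le (k : nat) (f g : boolfun k) : Prop := forall a, f a <= g a.

Definition monotoneBF (k : nat) (f : boolfun k) : Prop :=
  forall a b : cube k, cube_le a b -> f a <= f b.

Definition inFminus (k : nat) (f : boolfun k) : Prop :=
  monotoneBF f /\ f <> [ffun _ => false].

(* g[p_1 := e] : substitute e for the first variable; the result is a
   function of p_2..p_(k+1), identified with a function of k variables. *)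
Definition subst1 (k : nat) (g : boolfun k.+1) (e : bool) : boolfun k :=
  [ffun a : cube k =>
     g [ffun i : 'I_k.+1 => if unlift ord0 i is Some j then a j else e]].

(* Main.v *)
Require Import Defs.
From mathcomp Require Import all_boot.
Set Implicit Arguments. Unset Strict Implicit.

Definition i0 : 'I_3 := @Ordinal 3 0 isT.
Definition i1 : 'I_3 := @Ordinal 3 1 isT.
Definition i2 : 'I_3 := @Ordinal 3 2 isT.
Definition j0 : 'I_4 := @Ordinal 4 0 isT.
Definition j1 : 'I_4 := @Ordinal 4 1 isT.
Definition j2 : 'I_4 := @Ordinal 4 2 isT.
Definition j3 : 'I_4 := @Ordinal 4 3 isT.

Definition F (t u0 u1 u2 p v0 v1 v2 : bool) : bool :=
  let A := if t then
      (u0 && (v0 || v1 && v2)) || (u1 && (v1 || v0 && v2)) || (u2 && (v2 || v0 && v1))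
    else (u0 && v1 && v2) || (u1 && v0 && v2) || (u2 && v0 && v1) in
  let B := if t then true else (u0 || v0) && (u1 || v1) && (u2 || v2) in
  A || (p && B).

Definition phi (w : cube 4) : boolfun 4 :=
  [ffun v : cube 4 => F (w j0) (w j1) (w j2) (w j3) (v j0) (v j1) (v j2) (v j3)].

Definition mk4 (b0 b1 b2 b3 : bool) : cube 4 :=
  [ffun i : 'I_4 => nth false [:: b0; b1; b2; b3] i].
Definition mk3 (b0 b1 b2 : bool) : cube 3 :=
  [ffun i : 'I_3 => nth false [:: b0; b1; b2] i].

Lemma ord4 (P : 'I_4 -> Prop) : P j0 -> P j1 -> P j2 -> P j3 -> forall i, P i.
Proof.
move=> H0 H1 H2 H3 [[|[|[|[|n]]]] Hi] //.
- by rewrite (_ : Ordinal Hi = j0) //; apply: val_inj.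
- by rewrite (_ : Ordinal Hi = j1) //; apply: val_inj.
- by rewrite (_ : Ordinal Hi = j2) //; apply: val_inj.
- by rewrite (_ : Ordinal Hi = j3) //; apply: val_inj.
Qed.

Lemma ord3 (P : 'I_3 -> Prop) : P i0 -> P i1 -> P i2 -> forall i, P i.
Proof.
move=> H0 H1 H2 [[|[|[|n]]] Hi] //.
- by rewrite (_ : Ordinal Hi = i0) //; apply: val_inj.
- by rewrite (_ : Ordinal Hi = i1) //; apply: val_inj.
- by rewrite (_ : Ordinal Hi = i2) //; apply: val_inj.
Qed.

Lemma mk3E (a : cube 3) : a = mk3 (a i0) (a i1) (a i2).
Proof. by apply/ffunP; apply: ord3; rewrite ffunE. Qed.

Lemma mk4E (a : cube 4) : a = mk4 (a j0) (a j1) (a j2) (a j3).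
Proof. by apply/ffunP; apply: ord4; rewrite ffunE. Qed.

Lemma F_mono (t u0 u1 u2 p v0 v1 v2 p' v0' v1' v2' : bool) :
  p <= p' -> v0 <= v0' -> v1 <= v1' -> v2 <= v2' ->
  F t u0 u1 u2 p v0 v1 v2 <= F t u0 u1 u2 p' v0' v1' v2'.
Proof.
by case: t; case: u0; case: u1; case: u2; case: p; case: p'; case: v0; case: v0';
  case: v1; case: v1'; case: v2; case: v2'.
Qed.

Lemma F_iso (t u0 u1 u2 t' u0' u1' u2' p v0 v1 v2 : bool) :
  t <= t' -> u0 <= u0' -> u1 <= u1' -> u2 <= u2' ->
  F t u0 u1 u2 p v0 v1 v2 <= F t' u0' u1' u2' p v0 v1 v2.
Proof.
by case: t; case: u0; case: u1; case: u2; case: t'; case: u0'; case: u1'; case: u2';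
  case: p; case: v0; case: v1; case: v2.
Qed.

Definition allb := [:: false; true].

Definition allv : seq (bool * bool * bool * bool) :=
  [seq (x, d) | x <- [seq (y, c) | y <- [seq (a, b) | a <- [:: false; true], b <- [:: false; true]],
                      c <- [:: false; true]], d <- [:: false; true]].

Lemma F_inj (t u0 u1 u2 t' u0' u1' u2' : bool) :
  all (fun v => let: (a, b, c, d) := v in
         F t u0 u1 u2 a b c d == F t' u0' u1' u2' a b c d) allv ->
  [&& t == t', u0 == u0', u1 == u1' & u2 == u2'].
Proof.
by case: t; case: u0; case: u1; case: u2; case: t'; case: u0'; case: u1'; case: u2'.
Qed.

Definition monoh (h : bool -> bool -> bool -> bool) : bool :=
  [&& h false false false <= h true false false,
      h false false false <= h false true false,
      h false false false <= h false false true,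
      h true false false <= h true true false,
      h true false false <= h true false true,
      h false true false <= h true true false,
      h false true false <= h false true true,
      h false false true <= h true false true,
      h false false true <= h false true true,
      h true true false <= h true true true,
      h true false true <= h true true true &
      h false true true <= h true true true].


Definition cands : seq (bool * bool * bool * bool * bool) :=
  [seq (x, e) | x <- [seq (y, d) | y <- [seq (z, c) | z <- [seq (a, b) | a <- allb, b <- allb], c <- allb], d <- allb], e <- allb].

Definition matches (h : bool -> bool -> bool -> bool) (x : bool * bool * bool * bool * bool) :=
  let: (t, u0, u1, u2, e) := x in
  all (fun c0 => all (fun c1 => all (fun c2 =>
    F t u0 u1 u2 e c0 c1 c2 == h c0 c1 c2) allb) allb) allb.

Definition tab (h000 h100 h010 h001 h110 h101 h011 h111 : bool) (c0 c1 c2 : bool) :=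
  match c0, c1, c2 with
  | false, false, false => h000 | true, false, false => h100
  | false, true, false => h010 | false, false, true => h001
  | true, true, false => h110 | true, false, true => h101
  | false, true, true => h011 | true, true, true => h111 end.

Lemma cover (h000 h100 h010 h001 h110 h101 h011 h111 : bool) :
  let h := tab h000 h100 h010 h001 h110 h101 h011 h111 in
  monoh h -> [|| h000, h100, h010, h001, h110, h101, h011 | h111] ->
  has (matches h) cands.
Proof.
by case: h000; case: h100; case: h010; case: h001; case: h110; case: h101; case: h011; case: h111.
Qed.

Theorem mainTheorem6 :
  exists phi : cube 4 -> boolfun 4,
    [/\ injective phi,
        (forall x, inFminus (phi x)),
        (forall x y, cube_le x y -> bf_le (phi x) (phi y)) &
        (forall h : boolfun 3, inFminus h ->
           exists x : cube 4, exists e : bool, subst1 (phi x) e = h)].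
Proof.
exists phi; split.
- move=> x y Exy.
  have H : all (fun v => let: (a, b, c, d) := v in
         F (x j0) (x j1) (x j2) (x j3) a b c d == F (y j0) (y j1) (y j2) (y j3) a b c d) allv.
    apply/allP => [[[[a b] c] d]] _.
    have := congr1 (fun f : boolfun 4 => f (mk4 a b c d)) Exy.
    by rewrite /phi !ffunE /= => ->.
  case/and4P: (F_inj H) => /eqP E0 /eqP E1 /eqP E2 /eqP E3.
  by rewrite (mk4E x) (mk4E y) E0 E1 E2 E3.
- move=> x; split.
  + move=> a b Hab; rewrite !ffunE; apply: F_mono; apply: Hab.
  + move=> E; have := congr1 (fun f : boolfun 4 => f (mk4 true true true true)) E.
    rewrite !ffunE /=.
    by move: (x j0) (x j1) (x j2) (x j3) => [] [] [] [].
- move=> x y Hxy a; rewrite !ffunE; apply: F_iso; apply: Hxy.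
- move=> h [Hm Hn].
  pose hb c0 c1 c2 := h (mk3 c0 c1 c2).
  have M : forall c0 c1 c2 d0 d1 d2 : bool, c0 <= d0 -> c1 <= d1 -> c2 <= d2 ->
      hb c0 c1 c2 <= hb d0 d1 d2.
    move=> c0 c1 c2 d0 d1 d2 H0 H1 H2; apply: Hm; apply: ord3; by rewrite !ffunE.
  have Hmono : monoh (tab (hb false false false) (hb true false false) (hb false true false)
      (hb false false true) (hb true true false) (hb true false true) (hb false true true)
      (hb true true true)).
    by rewrite /monoh /= !M.
  have Hnz : [|| hb false false false, hb true false false, hb false true false,
      hb false false true, hb true true false, hb true false true, hb false true true
      | hb true true true].
    apply/negPn/negP => Hall; apply: Hn; apply/ffunP => a; rewrite ffunE (mk3E a).
    move: (a i0) (a i1) (a i2) => [] [] [];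
      by apply/negP => Ht; move: Hall; rewrite /hb Ht /= ?orbT.
  case/hasP: (cover Hmono Hnz) => [[[[[t u0] u1] u2] e]] _ Hm'.
  exists (mk4 t u0 u1 u2), e.
  apply/ffunP => a; rewrite /subst1 /phi !ffunE /=.
  have U0 : unlift ord0 j0 = None :> option 'I_3 by rewrite (_ : j0 = ord0) ?unlift_none //; apply: val_inj.
  have U1 : unlift ord0 j1 = Some i0 by rewrite (_ : j1 = lift ord0 i0) ?liftK //; apply: val_inj.
  have U2 : unlift ord0 j2 = Some i1 by rewrite (_ : j2 = lift ord0 i1) ?liftK //; apply: val_inj.
  have U3 : unlift ord0 j3 = Some i2 by rewrite (_ : j3 = lift ord0 i2) ?liftK //; apply: val_inj.
  rewrite U0 U1 U2 U3; have -> : h a = hb (a i0) (a i1) (a i2) by rewrite /hb -mk3E.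
  move: (a i0) (a i1) (a i2) => c0 c1 c2.
  have Hin : forall c : bool, c \in allb by case.
  move: Hm'; rewrite /matches => /allP /(_ c0 (Hin c0)) /allP /(_ c1 (Hin c1))
    /allP /(_ c2 (Hin c2)) /eqP ->.
  by move: c0 c1 c2 => [] [] [].
Qed.
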